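(* Let $u$ be a one-sided Sturmian sequence over $\{0,1\}$, let $X_u^+$ be the closure of $\{\sigma^n u : n\in\mathbb N\}$, and let $l=l_1l_2l_3\dots$ be the left special sequence of $X_u^+$, with $L_n=l_1\dots l_n$ for $n\ge 1$ and $L_0$ the empty block. Then the HB diagram of $X_u^+$ is the directed graph whose vertices are $0$, $1$, $0L_n$ and $1L_n$ for $n\ge 1$, and whose arrows are exactly the following: (1) if $l_1=0$: $0\to 1$, $0\to 00$ and $1\to 10$; if $l_1=1$: $1\to 0$, $1\to 11$ and $0\to 01$; (2) $0L_n\to 0L_{n+1}$ and $1L_n\to 1L_{n+1}$ for all $n\ge 1$; (3) whenever $xL_n$ and $wL_m$ ($x,w\in\{0,1\}$, $n>m\ge 0$) are consecutive right special significant blocks: (a) if $x\neq w$, then $xL_n\to wL_{m+1}$; (b) if $x=w$, then $xL_n\to \mathrm{sig}(wL_m y)$, where $y\in\{0,1\}$, $y\neq l_{m+1}$.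
   Context: A sequence $u\in\{0,1\}^{\mathbb N}$ is Sturmian if for every $n\ge1$ exactly $n+1$ distinct blocks of length $n$ occur in $u$. Let $\tilde X_u=\{x\in\{0,1\}^{\mathbb Z}: x_px_{p+1}\dots\in X_u^+ \text{ for all } p\in\mathbb Z\}$ be the natural extension; the languages (sets of finite blocks occurring) of $u$, $X_u^+$ and $\tilde X_u$ coincide. For each $n$ there is a unique block $L_n$ of length $n$ with both $0L_n$ and $1L_n$ in the language (left special block), and these are the prefixes of a single infinite sequence $l=l_1l_2\dots$, the left special sequence. A block $v$ is right special if both $v0$ and $v1$ are in the language; there is exactly one right special block of each length. For a block $a_{-n}\dots a_0$ in the language, $\mathrm{fol}(a_{-n}\dots a_0)=\{b_0b_1\dots\in X_u^+:\exists b\in\tilde X_u,\ b_{-n}\dots b_0=a_{-n}\dots a_0\}$. A block $a_{-n}\dots a_0$ ($n\ge1$) is significant if $\mathrm{fol}(a_{-n}\dots a_0)\subsetneq \mathrm{fol}(a_{-n+1}\dots a_0)$; the blocks $0$ and $1$ are also counted as significant. $\mathrm{sig}(a_{-n}\dots a_0)$ denotes the longest significant suffix of $a_{-n}\dots a_0$. The HB diagram has as vertices the significant blocks, with an arrow $\alpha\to\beta$ iff there is a symbol $b$ with $\alpha b$ in the language and $\beta=\mathrm{sig}(\alpha b)$. Two right special significant blocks of lengths $m+1<n+1$ are consecutive if there is no right special significant block of length strictly between $m+1$ and $n+1$. *)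

(* Defs.v *)
(* sequences over {0,1} are functions nat -> bool
   (false = 0, true = 1); blocks are seq bool; two-sided sequences int -> bool. *)
From mathcomp Require Import all_boot all_order all_algebra.
Set Implicit Arguments. Unset Strict Implicit. Unset Printing Implicit Defensive.

Definition occursAt (x : nat -> bool) (w : seq bool) (i : nat) : Prop :=
  forall j, j < size w -> x (i + j) = nth false w j.

Definition lang (u : nat -> bool) (w : seq bool) : Prop := exists i, occursAt u w i.

Definition Sturmian (u : nat -> bool) : Prop :=
  forall n, 0 < n ->
    exists s : seq (seq bool),
      [/\ uniq s, size s = n.+1 & forall w, w \in s <-> (size w = n /\ lang u w)].

(* X_u^+ : closure of the orbit {sigma^n u} in the product topology:
   every basic (cylinder) neighbourhood of x meets the orbit *)
Definition Xplus (u : nat -> bool) (x : nat -> bool) : Prop :=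
  forall k, exists n, forall j, j < k -> u (n + j) = x j.

Definition Xtilde (u : nat -> bool) (b : int -> bool) : Prop :=
  forall p : int, Xplus u (fun k : nat => b (GRing.add p (Posz k))).

(* fol(a_{-n} ... a_0), the block a being listed as [:: a_{-n}; ...; a_0] *)
Definition fol (u : nat -> bool) (a : seq bool) (y : nat -> bool) : Prop :=
  Xplus u y /\
  exists b : int -> bool,
    [/\ Xtilde u b,
        (forall i, i < size a -> b (GRing.add (Posz i) (GRing.opp (Posz (size a).-1))) = nth false a i)
      & forall k : nat, y k = b (Posz k)].

Definition significant (u : nat -> bool) (a : seq bool) : Prop :=
  lang u a /\
  (size a = 1 \/
   [/\ 2 <= size a,
       (forall y, fol u a y -> fol u (behead a) y)
     & exists y, fol u (behead a) y /\ ~ fol u a y]).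

Definition IsSig (u : nat -> bool) (a s : seq bool) : Prop :=
  [/\ suffix s a, significant u s
    & forall t, suffix t a -> significant u t -> size t <= size s].

Definition rightSpecial (u : nat -> bool) (v : seq bool) : Prop :=
  lang u (rcons v false) /\ lang u (rcons v true).

Definition leftSpecial (u : nat -> bool) (v : seq bool) : Prop :=
  lang u (false :: v) /\ lang u (true :: v).

Definition HBarrow (u : nat -> bool) (a b : seq bool) : Prop :=
  significant u a /\ exists c : bool, lang u (rcons a c) /\ IsSig u (rcons a c) b.

Definition consecRS (u : nat -> bool) (s t : seq bool) : Prop :=
  [/\ rightSpecial u s /\ significant u s, rightSpecial u t /\ significant u t,
      size s < size t
    & forall v, rightSpecial u v -> significant u v ->
        ~ (size s < size v /\ size v < size t)].

(* L_n = l_1 ... l_n, where l_k = l (k-1) *)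
Definition L (l : nat -> bool) (n : nat) : seq bool := mkseq l n.

Definition HBlisted (u l : nat -> bool) (a b : seq bool) : Prop :=
  (l 0 = false /\
     [\/ a = [:: false] /\ b = [:: true],
         a = [:: false] /\ b = [:: false; false]
       | a = [:: true] /\ b = [:: true; false]]) \/
  (l 0 = true /\
     [\/ a = [:: true] /\ b = [:: false],
         a = [:: true] /\ b = [:: true; true]
       | a = [:: false] /\ b = [:: false; true]]) \/
  (exists (x : bool) (n : nat), 1 <= n /\ a = x :: L l n /\ b = x :: L l n.+1) \/
  (exists (x w : bool) (n m : nat),
     [/\ m < n, consecRS u (w :: L l m) (x :: L l n), a = x :: L l n
       & ((x != w /\ b = w :: L l m.+1) \/
          (x = w /\ IsSig u (rcons (w :: L l m) (~~ l m)) b))]).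

(* Main.v *)
Require Import Defs.
From Stdlib Require ClassicalDescription.
From Stdlib Require Import Classical.
From mathcomp Require Import all_boot all_order all_algebra zify.
Set Implicit Arguments. Unset Strict Implicit. Unset Printing Implicit Defensive.
Import GRing.Theory.

Definition win (v : nat -> bool) i n : seq bool := mkseq (fun j => v (i + j)) n.

Lemma size_win v i n : size (win v i n) = n.
Proof. by rewrite size_mkseq. Qed.

Lemma nth_win v i n j : j < n -> nth false (win v i n) j = v (i + j).
Proof. by move=> h; rewrite nth_mkseq. Qed.

Lemma occursAt_win v w i : occursAt v w i <-> win v i (size w) = w.
Proof.
split=> [h|h].
  apply: (@eq_from_nth _ false); first by rewrite size_win.
  by move=> j; rewrite size_win => hj; rewrite nth_win // h.
by move=> j hj; have := congr1 (nth false ^~ j) h; rewrite /= nth_win.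
Qed.

Lemma lang_win v i n : lang v (win v i n).
Proof. by exists i; apply/occursAt_win; rewrite size_win. Qed.

Lemma langE v w : lang v w <-> exists i, win v i (size w) = w.
Proof. by split=> -[i hi]; exists i; apply/occursAt_win. Qed.

Definition langb v w : bool :=
  if ClassicalDescription.excluded_middle_informative (lang v w) then true else false.

Lemma langbP v w : reflect (lang v w) (langb v w).
Proof. by rewrite /langb; case: ClassicalDescription.excluded_middle_informative => h; constructor. Qed.

Lemma lang_catl v s t : lang v (s ++ t) -> lang v s.
Proof.
case=> i h; exists i => j hj; rewrite (h j); first by rewrite nth_cat hj.
rewrite size_cat; lia.
Qed.

Lemma lang_catr v s t : lang v (s ++ t) -> lang v t.
Proof.
case=> i h; exists (i + size s) => j hj.
have := h (size s + j); rewrite size_cat nth_cat ltn_add2l hj addKn addnA.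
have -> : (size s + j < size s) = false by lia.
by move=> ->.
Qed.

Lemma lang_rcons v w c : lang v (rcons w c) -> lang v w.
Proof. by rewrite -cats1 => /lang_catl. Qed.

Lemma lang_cons v w c : lang v (c :: w) -> lang v w.
Proof. by rewrite -cat1s => /lang_catr. Qed.

Lemma lang_take v w k : lang v w -> lang v (take k w).
Proof. by rewrite -{1}(cat_take_drop k w) => /lang_catl. Qed.

Lemma lang_drop v w k : lang v w -> lang v (drop k w).
Proof. by rewrite -{1}(cat_take_drop k w) => /lang_catr. Qed.

Lemma lang_rext v w : lang v w -> exists c, lang v (rcons w c).
Proof.
case=> i h; exists (v (i + size w)); exists i => j.
rewrite size_rcons ltnS leq_eqVlt => /orP[/eqP->|hj].
  by rewrite nth_rcons ltnn eqxx.
by rewrite nth_rcons hj h.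
Qed.

Lemma lang_nil v : lang v [::].
Proof. by exists 0. Qed.

Fixpoint allw n : seq (seq bool) :=
  if n is n'.+1 then [seq rcons w c | w <- allw n', c <- [:: false; true]]
  else [:: [::]].

Lemma allwS n : allw n.+1 = [seq rcons w c | w <- allw n, c <- [:: false; true]].
Proof. by []. Qed.

Lemma mem_allw n w : (w \in allw n) = (size w == n).
Proof.
elim: n w => [|n IH] w.
  by rewrite /= inE; case: w.
rewrite allwS; apply/allpairsP/idP => [[[w' c] [h1 h2 ->]]|].
  by rewrite size_rcons eqSS -IH.
case/lastP: w => [//|w c]; rewrite size_rcons eqSS => hw.
by exists (w, c); split => //; [rewrite IH | case: c].
Qed.

Lemma uniq_allw n : uniq (allw n).
Proof.
elim: n => [//|n IH]; rewrite allwS; apply: allpairs_uniq => //.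
by move=> [w c] [w' c'] _ _ /= /eqP; rewrite eqseq_rcons => /andP[/eqP-> /eqP->].
Qed.

Lemma allw_cons n : perm_eq (allw n.+1) [seq c :: w | w <- allw n, c <- [:: false; true]].
Proof.
apply: uniq_perm; first exact: uniq_allw.
  apply: allpairs_uniq => //; first exact: uniq_allw.
  by move=> [w c] [w' c'] _ _ /= [-> ->].
move=> w; rewrite mem_allw; apply/idP/allpairsP => [|[[w' c] [h1 h2 ->]]].
  case: w => [//|c w] /=; rewrite eqSS => hw; exists (w, c); split => //.
    by rewrite mem_allw.
  by case: c.
by rewrite /= eqSS -mem_allw.
Qed.

Lemma count_pairs (P : pred (seq bool)) (f : seq bool -> bool -> seq bool) s :
  count P [seq f w c | w <- s, c <- [:: false; true]] =
  sumn [seq P (f w false) + P (f w true) | w <- s].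
Proof. elim: s => [//|w s IH]; rewrite /= IH; lia. Qed.

Lemma sumn_add T (a b : pred T) s :
  sumn [seq (a x : nat) + b x | x <- s] = count a s + count b s.
Proof. elim: s => [//|x s IH] /=; rewrite IH; lia. Qed.

Definition q v n := count (langb v) (allw n).
Definition RSb v w := langb v (rcons w false) && langb v (rcons w true).
Definition LSb v w := langb v (false :: w) && langb v (true :: w).

Lemma q_succ v n : q v n.+1 = q v n + count (RSb v) (allw n).
Proof.
rewrite /q allwS count_pairs -sumn_add; congr sumn; apply: eq_map => w.
rewrite /RSb.
case: (langbP v (rcons w false)) => h0; case: (langbP v (rcons w true)) => h1 /=;
  case: (langbP v w) => hw //.
- by case: hw; apply: lang_rcons h0.
- by case: hw; apply: lang_rcons h0.
- by case: hw; apply: lang_rcons h1.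
- by case: (lang_rext hw) => -[] hc.
Qed.


Lemma count_two (T : eqType) (s : seq T) (P : pred T) x y :
  x \in s -> y \in s -> x != y -> P x -> P y -> 1 < count P s.
Proof.
move=> hx hy hxy px py; rewrite -size_filter.
have : {subset [:: x; y] <= filter P s}.
  by move=> z; rewrite !inE => /orP[]/eqP->; rewrite mem_filter ?px ?py ?hx ?hy.
by move/(uniq_leq_size); rewrite /= inE hxy => /(_ isT).
Qed.

Lemma count_sub1 (T : eqType) (a b : pred T) (s : seq T) x :
  (forall z, a z -> b z) -> x \in s -> b x -> ~~ a x -> (count a s).+1 <= count b s.
Proof.
move=> hab; elim: s => [//|y s IH]; rewrite inE => /orP[/eqP<-|hx] hb ha /=.
  have := sub_count hab s; rewrite hb (negbTE ha); lia.
have := IH hx hb ha; case: (a y) (hab y) => [->//|_] /=; case: (b y) => /=; lia.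
Qed.

Lemma winS v i n : win v i n.+1 = rcons (win v i n) (v (i + n)).
Proof. by rewrite /win mkseqS. Qed.

Lemma q_succL v n : q v n.+1 = sumn [seq langb v (false :: w) + langb v (true :: w) | w <- allw n].
Proof. by rewrite /q (permP (allw_cons n)) count_pairs. Qed.

Lemma q0 v : q v 0 = 1.
Proof. by rewrite /q /=; case: langbP => // h; case: h; exact: lang_nil. Qed.

Lemma q_filter v n : q v n = size (filter (langb v) (allw n)).
Proof. by rewrite size_filter. Qed.

Lemma win_red v p d n : 0 < d -> (forall t, v (p + t + d) = v (p + t)) ->
  forall i, exists2 i', i' < p + d & win v i' n = win v i n.
Proof.
move=> hd hp; elim/ltn_ind => i IH.
case: (ltnP i (p + d)) => hi; first by exists i.
have [i' h1 h2] := IH (i - d) ltac:(lia).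
exists i' => //; rewrite h2; apply: eq_mkseq => j.
have := hp (i - d - p + j); have -> : p + (i - d - p + j) + d = i + j by lia.
by have -> : p + (i - d - p + j) = i - d + j by lia.
Qed.

Lemma ep_bound v p d : 0 < d -> (forall t, v (p + t + d) = v (p + t)) ->
  forall n, q v n <= p + d.
Proof.
move=> hd hp n; rewrite q_filter.
have -> : p + d = size (map (fun i => win v i n) (iota 0 (p + d))) by rewrite size_map size_iota.
apply: uniq_leq_size; first by apply: filter_uniq; apply: uniq_allw.
move=> w; rewrite mem_filter mem_allw => /andP[/langbP /langE [i hi] /eqP hs].
have [i' h1 h2] := win_red n hd hp i.
by apply/mapP; exists i'; [rewrite mem_iota | rewrite h2 -hs hi].
Qed.

Lemma MH v N : q v N <= N -> exists p d, 0 < d /\ forall t, v (p + t + d) = v (p + t).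
Proof.
move=> hN.
have [k [hk hc]] : exists k, k < N /\ count (RSb v) (allw k) = 0.
  apply: NNPP => hne.
  have : forall K, K <= N -> K < q v K.
    elim=> [|K IH] hK; first by rewrite q0.
    rewrite q_succ; have := IH (ltnW hK).
    have : count (RSb v) (allw K) <> 0 by move=> h; apply: hne; exists K; split.
    lia.
  by move/(_ N (leqnn N)); lia.
have noRS : forall w, size w = k -> ~~ RSb v w.
  move=> w hw; apply/negP => hr.
  have : 0 < count (RSb v) (allw k) by rewrite -has_count; apply/hasP; exists w; rewrite ?mem_allw ?hw.
  by rewrite hc.
set s0 := map (fun i => win v i k) (iota 0 (q v k).+1).
have : ~~ uniq s0.
  apply/negP => hu.
  have : size s0 <= size (filter (langb v) (allw k)).
    apply: uniq_leq_size => // w /mapP [i _ ->].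
    by rewrite mem_filter mem_allw size_win eqxx andbT; apply/langbP; apply: lang_win.
  by rewrite size_map size_iota -q_filter ltnn.
case/(uniqPn [::]) => i [j [hij hj]]; rewrite size_map size_iota in hj.
rewrite (nth_map 0) ?size_iota; last lia.
rewrite (nth_map 0) ?size_iota // !nth_iota; last lia.
rewrite !add0n => hw.
have key : forall t, (forall t', t' < t -> v (i + t') = v (j + t')) -> v (i + t) = v (j + t).
  move=> t IH.
  case: (ltnP t k) => htk.
    by have := congr1 (nth false ^~ t) hw; rewrite /= !nth_win.
  set w := win v (i + (t - k)) k.
  have hw2 : win v (j + (t - k)) k = w.
    apply: (@eq_from_nth _ false); rewrite ?size_win // => x hx.
    rewrite !nth_win // -!addnA; symmetry; apply: IH; lia.
  have l1 : lang v (rcons w (v (i + t))).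
    by rewrite /w -(_ : i + (t - k) + k = i + t) -?winS; [apply: lang_win | lia].
  have l2 : lang v (rcons w (v (j + t))).
    by rewrite -hw2 -(_ : j + (t - k) + k = j + t) -?winS; [apply: lang_win | lia].
  apply: NNPP => hne; move/negP: (noRS w (size_win _ _ _)); apply.
  rewrite /RSb; case: (v (i + t)) l1 hne => l1 hne; move: l2.
    by case: (v (j + t)) hne => // _ l2; rewrite !(introT (langbP _ _)).
  by case: (v (j + t)) hne => // _ l2; rewrite !(introT (langbP _ _)).
have all : forall t, v (i + t) = v (j + t).
  by elim/ltn_ind => t IH; apply: key.
exists i, (j - i); split; first lia.
by move=> t; rewrite (_ : i + t + (j - i) = j + t) -?all //; lia.
exact: hj.
Qed.

Lemma RSbP v w : reflect (rightSpecial v w) (RSb v w).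
Proof.
rewrite /RSb /rightSpecial; case: langbP => h1; case: langbP => h2; constructor; tauto.
Qed.

Lemma LSbP v w : reflect (leftSpecial v w) (LSb v w).
Proof.
rewrite /LSb /leftSpecial; case: langbP => h1; case: langbP => h2; constructor; tauto.
Qed.

Section Stur.
Variable u : nat -> bool.
Hypothesis hS : Sturmian u.

Lemma q_stur n : q u n = n.+1.
Proof.
case: n => [|n]; first exact: q0.
have [s [hu hsz hm]] := hS (ltn0Sn n).
rewrite q_filter -hsz; apply: perm_size; apply: uniq_perm.
- by apply: filter_uniq; apply: uniq_allw.
- exact: hu.
move=> w; rewrite mem_filter mem_allw; apply/andP/idP.
  by case=> /langbP h /eqP e; apply/hm.
by move/hm => [e h]; split; [apply/langbP|apply/eqP].
Qed.

Lemma aper p d : 0 < d -> ~ (forall t, u (p + t + d) = u (p + t)).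
Proof. by move=> hd hp; have := ep_bound hd hp (p + d); rewrite q_stur ltnn. Qed.

Lemma recur_prefix k : exists2 j, 0 < j & occursAt u (win u 0 k) j.
Proof.
apply: NNPP => hne.
pose v t := u t.+1.
have hsub : forall w, langb v w -> langb u w.
  move=> w /langbP [i hi]; apply/langbP; exists i.+1 => j hj.
  by rewrite -hi // /v addSn.
have hx : ~~ langb v (win u 0 k.+1).
  apply/negP => /langbP [i hi]; apply: hne; exists i.+1 => //.
  move=> j; rewrite size_win => hj.
  have := hi j; rewrite size_win ltnS => /(_ (ltnW hj)).
  rewrite /v (nth_win _ _ hj) nth_win; last lia.
  by rewrite addSn.
have := count_sub1 hsub (x := win u 0 k.+1) (s := allw k.+1).
rewrite mem_allw size_win eqxx hx => /(_ isT).
have -> : langb u (win u 0 k.+1) by apply/langbP; apply: lang_win.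
move=> /(_ isT isT); rewrite -/(q v _) -/(q u _) q_stur ltnS => /MH [p [d [hd hp]]].
apply: (aper (p := p.+1) hd) => t; have := hp t.
by rewrite /v addSn.
Qed.

Lemma recur_occ w p : occursAt u w p -> exists2 q, p < q & occursAt u w q.
Proof.
move=> ho; have [j hj hoc] := recur_prefix (p + size w).
exists (p + j); first lia.
move=> x hx; rewrite -(ho x hx).
have := hoc (p + x); rewrite size_win nth_win; last lia.
by rewrite add0n addnA (addnC p j) => ->; lia.
Qed.

Lemma lext w : lang u w -> exists c, lang u (c :: w).
Proof.
case=> p ho; have [q hq ho2] := recur_occ ho.
exists (u q.-1); exists q.-1 => j; case: j => [|j] /= hj; first by rewrite addn0.
by rewrite -ho2 //; congr u; lia.
Qed.

Lemma cRS n : count (RSb u) (allw n) = 1.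
Proof. by have := q_succ u n; rewrite !q_stur; lia. Qed.

Lemma cLS n : count (LSb u) (allw n) = 1.
Proof.
have := q_succL u n; rewrite !q_stur.
have -> : sumn [seq langb u (false :: w) + langb u (true :: w) | w <- allw n] =
  sumn [seq (langb u w : nat) + LSb u w | w <- allw n].
  congr sumn; apply: eq_map => w; rewrite /LSb.
  case: (langbP u (false :: w)) => h0; case: (langbP u (true :: w)) => h1 /=;
    case: (langbP u w) => hw //.
  - by case: hw; apply: lang_cons h0.
  - by case: hw; apply: lang_cons h0.
  - by case: hw; apply: lang_cons h1.
  - by case: (lext hw) => -[] hc.
by rewrite sumn_add -/(q u n) q_stur; lia.
Qed.

Lemma RS_uniq v v' : rightSpecial u v -> rightSpecial u v' -> size v = size v' -> v = v'.
Proof.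
move=> /RSbP h /RSbP h' e; apply: NNPP => ne.
have := count_two (s := allw (size v)) (P := RSb u) (x := v) (y := v').
rewrite !mem_allw e eqxx cRS => /(_ isT isT); rewrite h h'.
by case: eqP => // _ /(_ isT isT isT).
Qed.

Lemma LS_uniq v v' : leftSpecial u v -> leftSpecial u v' -> size v = size v' -> v = v'.
Proof.
move=> /LSbP h /LSbP h' e; apply: NNPP => ne.
have := count_two (s := allw (size v)) (P := LSb u) (x := v) (y := v').
rewrite !mem_allw e eqxx cLS => /(_ isT isT); rewrite h h'.
by case: eqP => // _ /(_ isT isT isT).
Qed.

End Stur.


Lemma nxt_letter u v c1 c2 : ~ rightSpecial u v -> lang u (rcons v c1) -> lang u (rcons v c2) -> c1 = c2.
Proof. by case: c1; case: c2 => // hn h1 h2; case: hn; split. Qed.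

Lemma win_eq (u : nat -> bool) a b n : (forall s, s < n -> u (a + s) = u (b + s)) -> win u a n = win u b n.
Proof.
move=> h; apply: (@eq_from_nth _ false); rewrite ?size_win // => s hs.
by rewrite !nth_win // h.
Qed.

Section Ret.
Variable u : nat -> bool.
Hypothesis hS : Sturmian u.

Definition NX (w : seq bool) p q :=
  [/\ p < q, occursAt u w q & forall r, p < r -> r < q -> ~ occursAt u w r].

Lemma NX_ex w p : occursAt u w p -> exists q, NX w p q.
Proof.
move=> ho.
have ex : exists q, (p < q) && (win u q (size w) == w).
  have [q h1 h2] := recur_occ hS ho; exists q; rewrite h1 /=; apply/eqP/occursAt_win.
  exact: h2.
case: (ex_minnP ex) => q /andP[h1 /eqP h2] hmin; exists q; split => //.
  exact/occursAt_win.
move=> r hr1 hr2 /occursAt_win hr; have := hmin r; rewrite hr1 hr eqxx => /(_ isT); lia.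
Qed.

Lemma NX_uniq w p q q' : NX w p q -> NX w p q' -> q = q'.
Proof.
move=> [a1 a2 a3] [b1 b2 b3]; case: (ltngtP q q') => // h.
- by case: (b3 q).
- by case: (a3 q').
Qed.

Lemma det w p p' q q' :
  (forall v, size v = size w -> rightSpecial u v -> v = w) ->
  occursAt u w p -> occursAt u w p' -> u (p + size w) = u (p' + size w) ->
  NX w p q -> NX w p' q' ->
  q' = p' + (q - p) /\ forall t, t < q - p + size w -> u (p + t) = u (p' + t).
Proof.
move=> hRS hp hp' ht hq hq'.
have [hq1 hq2 hq3] := hq.
set m := size w in hRS ht *.
have letters : forall s, s < q - p + m -> u (p + s) = u (p' + s).
  elim/ltn_ind => s IH hs.
  case: (ltnP s m) => hsm; first by rewrite hp // hp'.
  case: (eqVneq s m) => [->//|hne].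
  set t := s - m.
  have e1 : win u (p' + t) m = win u (p + t) m.
    apply: win_eq => x hx; rewrite -!addnA; symmetry; apply: IH; lia.
  have nw : win u (p + t) m <> w.
    by move=> e; apply: (hq3 (p + t)); [lia | lia | apply/occursAt_win].
  have l1 : lang u (rcons (win u (p + t) m) (u (p + s))).
    by rewrite -(_ : p + t + m = p + s) -?winS; [apply: lang_win | lia].
  have l2 : lang u (rcons (win u (p + t) m) (u (p' + s))).
    by rewrite -e1 -(_ : p' + t + m = p' + s) -?winS; [apply: lang_win | lia].
  apply: (nxt_letter _ l1 l2) => hr; apply: nw; apply: hRS => //; exact: size_win.
split => //.
have occ' : occursAt u w (p' + (q - p)).
  apply/occursAt_win; rewrite -/m; have := hq2 => /occursAt_win <-.
  apply: win_eq => x hx.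
  rewrite (_ : q + x = p + (q - p + x)); last lia.
  rewrite -addnA; symmetry; apply: letters; lia.
apply: (NX_uniq hq'); split => //; first lia.
move=> r hr1 hr2 /occursAt_win hr; apply: (hq3 (p + (r - p'))); [lia|lia|].
apply/occursAt_win; rewrite -/m -hr; apply: win_eq => x hx.
rewrite (_ : r + x = p' + (r - p' + x)); last lia.
rewrite -addnA; apply: letters; lia.
Qed.

Lemma per_chain p0 D : 0 < D ->
  (forall i r, r < D -> u (p0 + i * D + r) = u (p0 + r)) -> False.
Proof.
move=> hD h; apply: (aper hS (p := p0) hD) => T.
have hr : T %% D < D by rewrite ltn_mod.
have e := divn_eq T D.
rewrite (_ : p0 + T + D = p0 + (T %/ D).+1 * D + T %% D); last first.
  by rewrite mulSn; lia.
rewrite (_ : p0 + T = p0 + T %/ D * D + T %% D); last lia.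
by rewrite !h.
Qed.

End Ret.

Lemma occ_rcons (u : nat -> bool) w q c : occursAt u w q -> u (q + size w) = c -> occursAt u (rcons w c) q.
Proof.
move=> ho hc j; rewrite size_rcons ltnS leq_eqVlt => /orP[/eqP->|hj].
  by rewrite nth_rcons ltnn eqxx.
by rewrite nth_rcons hj ho.
Qed.

Lemma occ_cons (u : nat -> bool) w q x : 0 < q -> occursAt u w q -> u q.-1 = x -> occursAt u (x :: w) q.-1.
Proof.
move=> hq ho hx [|j] /= hj; first by rewrite addn0.
by rewrite -ho //; congr u; lia.
Qed.

Lemma occ_prefix (u : nat -> bool) w w' q : occursAt u (w ++ w') q -> occursAt u w q.
Proof. by move=> h j hj; rewrite h ?nth_cat ?hj // size_cat; lia. Qed.

Lemma occ_lang (u : nat -> bool) w q : occursAt u w q -> lang u w.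
Proof. by exists q. Qed.

Section Bisp.
Variable u l : nat -> bool.
Hypothesis hS : Sturmian u.
Hypothesis hl : forall n, leftSpecial u (L l n).

Lemma size_L n : size (L l n) = n.
Proof. exact: size_mkseq. Qed.

Lemma L_S n : L l n.+1 = rcons (L l n) (l n).
Proof. exact: mkseqS. Qed.

Lemma nth_L n i : i < n -> nth false (L l n) i = l i.
Proof. by move=> h; rewrite nth_mkseq. Qed.

Lemma take_L k n : k <= n -> take k (L l n) = L l k.
Proof.
move=> h; have hs : size (take k (L l n)) = k.
  by rewrite size_take size_L; case: ltnP => //; lia.
apply: (@eq_from_nth _ false); rewrite hs ?size_L // => i hi.
rewrite nth_take // !nth_L //; lia.
Qed.

Lemma L_cat k n : k <= n -> L l n = L l k ++ drop k (L l n).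
Proof. by move=> h; rewrite -{1}(cat_take_drop k (L l n)) take_L. Qed.

Lemma lang_L n : lang u (L l n).
Proof. by case: (hl n) => h _; apply: lang_cons h. Qed.

Lemma LS_L w : leftSpecial u w -> w = L l (size w).
Proof. by move=> h; apply: (LS_uniq hS h (hl _)); rewrite size_L. Qed.

Lemma lang1 b : lang u [:: b].
Proof.
have := q_stur hS 1; rewrite /q /= addn0.
by case: (langbP u [:: false]) => h0; case: (langbP u [:: true]) => h1 //; case: b.
Qed.

Lemma BS0 : rightSpecial u (L l 0).
Proof. by split; apply: lang1. Qed.

Lemma occL k m r : m <= k -> occursAt u (L l k) r -> occursAt u (L l m) r.
Proof. by move=> h; rewrite (L_cat h) => /occ_prefix. Qed.

Lemma occL_nth k r j : occursAt u (L l k) r -> j < k -> u (r + j) = l j.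
Proof. by move=> h hj; rewrite h ?size_L // nth_L. Qed.

Definition Pm m := forall p q, occursAt u (L l m) p -> NX u (L l m) p q -> u q.-1 = u (p + m).

Lemma hRS m : rightSpecial u (L l m) -> forall v, size v = size (L l m) -> rightSpecial u v -> v = L l m.
Proof. by move=> h v hv hr; apply: (RS_uniq hS hr h hv). Qed.

Lemma allA m : rightSpecial u (L l m) ->
  (forall p q, occursAt u (L l m) p -> u (p + m) = l m -> NX u (L l m) p q -> u (q + m) = l m) -> False.
Proof.
move=> hbs hA.
have [pA hpA] := lang_L m.+1; rewrite L_S in hpA.
have hoA : occursAt u (L l m) pA by move: hpA; rewrite -cats1 => /occ_prefix.
have htA : u (pA + m) = l m.
  by have := hpA m; rewrite size_rcons size_L nth_rcons size_L ltnn eqxx; apply.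
have [q0 hq0] := NX_ex hS hoA.
set D := q0 - pA.
have hD : 0 < D by case: hq0; rewrite /D; lia.
have ch : forall i, [/\ occursAt u (L l m) (pA + i * D), u (pA + i * D + m) = l m
                     & NX u (L l m) (pA + i * D) (pA + i.+1 * D)].
  elim=> [|i [h1 h2 h3]].
    rewrite mul0n addn0 mul1n; split => //.
    by rewrite (_ : pA + D = q0) //; case: hq0; rewrite /D; lia.
  have [h4 h5 h6] := h3.
  have h7 := hA _ _ h1 h2 h3.
  have [q' hq'] := NX_ex hS h5.
  have ht' : u (pA + size (L l m)) = u (pA + i.+1 * D + size (L l m)) by rewrite size_L htA h7.
  have [e1 _] := det (hRS hbs) hoA h5 ht' hq0 hq'.
  by split => //; rewrite (_ : pA + i.+2 * D = q'); [| rewrite e1 mulSn; lia].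
apply: (@per_chain u hS pA D hD) => i r hr.
have [h1 h2 h3] := ch i.
have [q' hq'] := NX_ex hS h1.
have ht' : u (pA + size (L l m)) = u (pA + i * D + size (L l m)) by rewrite size_L htA h2.
have [_ e2] := det (hRS hbs) hoA h1 ht' hq0 hq'.
by rewrite -e2 // size_L -/D; lia.
Qed.

Lemma XE m : rightSpecial u (L l m) -> Pm m -> lang u (l m :: rcons (L l m) (~~ l m)).
Proof.
move=> hbs hP; apply: NNPP => hne; apply: (allA hbs) => p q hp ht hq.
have [hq1 hq2 hq3] := hq.
have e1 : u q.-1 = l m by rewrite (hP _ _ hp hq).
case: (boolP (u (q + m) == l m)) => [/eqP//|hne2]; case: hne.
have e2 : u (q + size (L l m)) = ~~ l m by rewrite size_L; move: hne2; case: (u _); case: (l m).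
apply: (@occ_lang u _ q.-1); apply: occ_cons; [lia | exact: occ_rcons | exact: e1].
Qed.

Lemma notBB m : rightSpecial u (L l m) -> Pm m -> ~ lang u (~~ l m :: rcons (L l m) (~~ l m)).
Proof.
move=> hbs hP h; have h2 := XE hbs hP.
have hls : leftSpecial u (rcons (L l m) (~~ l m)).
  by case: (l m) h h2 => /= ha hb; split.
have := LS_L hls; rewrite size_rcons size_L L_S => /eqP.
by rewrite eqseq_rcons eqxx /=; case: (l m).
Qed.

End Bisp.

Lemma lang_rcons_occ (u : nat -> bool) w c : lang u (rcons w c) ->
  exists p, occursAt u w p /\ u (p + size w) = c.
Proof.
case=> p hp; exists p; split; first by move: hp; rewrite -cats1 => /occ_prefix.
by have := hp (size w); rewrite size_rcons nth_rcons ltnn eqxx; apply.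
Qed.

Lemma win_occ (u : nat -> bool) w p : win u p (size w) = w -> occursAt u w p.
Proof. by move/occursAt_win. Qed.

Section Step.
Variable u l : nat -> bool.
Hypothesis hS : Sturmian u.
Hypothesis hl : forall n, leftSpecial u (L l n).

Lemma step m : rightSpecial u (L l m) -> Pm u l m ->
  exists n, [/\ m < n, rightSpecial u (L l n), Pm u l n
             & forall k, m < k -> k < n -> ~ rightSpecial u (L l k)].
Proof.
move=> hbs hP.
have hR := hRS hS hbs.
have T2 : forall p q, occursAt u (L l m) p -> u (p + m) = ~~ l m ->
    NX u (L l m) p q -> u (q + m) = l m.
  move=> p q hp ht hq.
  have e1 : u q.-1 = ~~ l m by rewrite (hP _ _ hp hq).
  have [hq1 hq2 _] := hq.
  case: (boolP (u (q + m) == l m)) => [/eqP//|hne]; exfalso.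
  apply: (notBB hS hl hbs hP); apply: (@occ_lang u _ q.-1); apply: occ_cons; [lia| |exact: e1].
  by apply: occ_rcons => //; rewrite size_L; move: hne; case: (u _); case: (l m).
have [pA hpA] := lang_L hl m.+1; rewrite L_S in hpA.
have hoA : occursAt u (L l m) pA by move: hpA; rewrite -cats1 => /occ_prefix.
have htA : u (pA + m) = l m.
  by have := hpA m; rewrite size_rcons size_L nth_rcons size_L ltnn eqxx; apply.
have [q0 hq0] := NX_ex hS hoA.
have [hq01 hq02 hq03] := hq0.
pose DA := q0 - pA.
have hDA : 0 < DA by rewrite /DA; lia.
pose n := DA + m.
pose rho := win u pA n.
have F4 : forall p q, occursAt u (L l m) p -> u (p + m) = l m -> NX u (L l m) p q ->
    q = p + DA /\ win u p n = rho.
  move=> p q hp ht hq.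
  have ht' : u (pA + size (L l m)) = u (p + size (L l m)) by rewrite size_L htA ht.
  have [e1 e2] := det hR hoA hp ht' hq0 hq.
  split => //; rewrite /rho; symmetry; apply: win_eq => s hs; apply: e2.
  by rewrite size_L /n /DA in hs *; lia.
have F5 : exists p q, [/\ occursAt u (L l m) p, u (p + m) = l m, NX u (L l m) p q
                        & u (q + m) = l m].
  apply: NNPP => hne.
  have hB : forall p q, occursAt u (L l m) p -> u (p + m) = l m -> NX u (L l m) p q ->
      u (q + m) = ~~ l m.
    move=> p q hp ht hq; case: (boolP (u (q + m) == l m)) => [/eqP h|h].
      by case: hne; exists p, q.
    by move: h; case: (u _); case: (l m).
  have ht1 : u (q0 + m) = ~~ l m := hB _ _ hoA htA hq0.
  have [q2 hq2] := NX_ex hS hq02.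
  have [hq21 hq22 hq23] := hq2.
  pose DB := q2 - q0.
  pose D := DA + DB.
  have hD : 0 < D by rewrite /D; lia.
  have ch : forall i, [/\ occursAt u (L l m) (pA + i * D), u (pA + i * D + m) = l m,
      NX u (L l m) (pA + i * D) (pA + i * D + DA), u (pA + i * D + DA + m) = ~~ l m
    & NX u (L l m) (pA + i * D + DA) (pA + i.+1 * D)].
    elim=> [|i [h1 h2 h3 h4 h5]].
      rewrite mul0n addn0 mul1n.
      have e1 : pA + DA = q0 by rewrite /DA; lia.
      have e2 : pA + D = q2 by rewrite /D /DA /DB; lia.
      by rewrite e1 e2; split.
    have [h31 h32 h33] := h3.
    have [h51 h52 h53] := h5.
    have t1 := T2 _ _ h32 h4 h5.
    have [q' hq'] := NX_ex hS h52.
    have [e1 _] := F4 _ _ h52 t1 hq'.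
    have t2 := hB _ _ h52 t1 hq'.
    have [hq'1 hq'2 _] := hq'.
    have [q'' hq''] := NX_ex hS hq'2.
    have ht' : u (q0 + size (L l m)) = u (q' + size (L l m)) by rewrite size_L ht1 t2.
    have [e3 _] := det hR hq02 hq'2 ht' hq2 hq''.
    have e4 : q' = pA + i.+1 * D + DA by rewrite e1.
    have e5 : q'' = pA + i.+2 * D by rewrite e3 e4 (mulSn _ D) /DB /D; lia.
    by split => //; rewrite -?e4 -?e5.
  apply: (@per_chain u hS pA D hD) => i r hr.
  have [h1 h2 h3 h4 h5] := ch i.
  case: (ltnP r DA) => hr2.
    have ht' : u (pA + size (L l m)) = u (pA + i * D + size (L l m)) by rewrite size_L htA h2.
    have [_ e2] := det hR hoA h1 ht' hq0 h3.
    by rewrite -e2 // size_L; lia.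
  have [_ h32 _] := h3.
  have ht' : u (q0 + size (L l m)) = u (pA + i * D + DA + size (L l m)) by rewrite size_L ht1 h4.
  have [_ e2] := det hR hq02 h32 ht' hq2 h5.
  rewrite (_ : pA + i * D + r = pA + i * D + DA + (r - DA)); last lia.
  rewrite -e2; last by rewrite size_L; rewrite /D /DB in hr; lia.
  by congr u; rewrite /DA; lia.
have F6 : exists p q, [/\ occursAt u (L l m) p, u (p + m) = l m, NX u (L l m) p q
                        & u (q + m) = ~~ l m].
  apply: NNPP => hne; apply: (allA hS hl hbs) => p q hp ht hq.
  case: (boolP (u (q + m) == l m)) => [/eqP//|h]; case: hne; exists p, q; split => //.
  by move: h; case: (u _); case: (l m).
have F7 : exists q, [/\ occursAt u (L l m) q, u (q + m) = l m, u q.-1 = ~~ l m & 0 < q].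
  have hlb : lang u (rcons (L l m) (~~ l m)) by case: hbs; case: (l m).
  have [pB [hpB htB]] := lang_rcons_occ hlb; rewrite size_L in htB.
  have [qB hqB] := NX_ex hS hpB.
  have [hqB1 hqB2 _] := hqB.
  exists qB; split => //; [exact: T2 _ _ hpB htB hqB | rewrite (hP _ _ hpB hqB) // | lia].
have hsz : size rho = n by rewrite size_win.
have occrho : forall q, occursAt u (L l m) q -> u (q + m) = l m -> occursAt u rho q.
  move=> q hq ht; have [q' hq'] := NX_ex hS hq; have [_ e] := F4 _ _ hq ht hq'.
  by apply: win_occ; rewrite hsz.
have hLS : leftSpecial u rho.
  have la : lang u (l m :: rho).
    have [p [q [hp ht hq htq]]] := F5; have [hq1 hq2 _] := hq.
    apply: (@occ_lang u _ q.-1); apply: occ_cons; [lia | exact: occrho |].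
    by rewrite (hP _ _ hp hq).
  have lb : lang u (~~ l m :: rho).
    have [q [hq ht hb hq0']] := F7.
    by apply: (@occ_lang u _ q.-1); apply: occ_cons; [lia | exact: occrho |].
  by move: la lb; case: (l m) => ha hb; split.
have hrho : rho = L l n by rewrite (LS_L hS hl hLS) hsz.
have hRSn : rightSpecial u (L l n).
  have key : forall p q c, occursAt u (L l m) p -> u (p + m) = l m -> NX u (L l m) p q ->
      u (q + m) = c -> lang u (rcons rho c).
    move=> p q c hp ht hq hc; have [e1 e2] := F4 _ _ hp ht hq.
    apply: (@occ_lang u _ p); apply: occ_rcons; first exact: occrho.
    by rewrite hsz -hc e1 /n addnA.
  have la : lang u (rcons rho (l m)).
    by have [p [q [hp ht hq htq]]] := F5; exact: key hp ht hq htq.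
  have lb : lang u (rcons rho (~~ l m)).
    by have [p [q [hp ht hq htq]]] := F6; exact: key hp ht hq htq.
  by rewrite -hrho; move: la lb; case: (l m) => ha hb; split.
exists n; split => //.
- by rewrite /n; lia.
- move=> p q hp hq.
  have hmn : m <= n by rewrite /n; lia.
  have hpw := occL hmn hp.
  have hpt : u (p + m) = l m by apply: (occL_nth hp); rewrite /n; lia.
  have [q1 hq1] := NX_ex hS hpw.
  have [e1 _] := F4 _ _ hpw hpt hq1.
  have [hq11 hq12 hq13] := hq1.
  have occn : forall r, occursAt u (L l m) r -> u (r + m) = l m -> occursAt u (L l n) r.
    by move=> r hr hrt; rewrite -hrho; exact: occrho.
  have hpn : p + n = q1 + m by rewrite e1 /n; lia.
  case: (boolP (u (q1 + m) == l m)) => [/eqP ht1|ht1].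
    have hN : NX u (L l n) p q1.
      split => //; first exact: occn.
      by move=> r hr1 hr2 hr; apply: (hq13 r) => //; exact: (occL hmn hr).
    by rewrite (NX_uniq hq hN) (hP _ _ hpw hq1) hpt hpn ht1.
  have ht1' : u (q1 + m) = ~~ l m by move: ht1; case: (u _); case: (l m).
  have [q2 hq2] := NX_ex hS hq12.
  have [hq21 hq22 hq23] := hq2.
  have t2 := T2 _ _ hq12 ht1' hq2.
  have hN : NX u (L l n) p q2.
    split; [lia | exact: occn |].
    move=> r hr1 hr2 hr; have hrw := occL hmn hr.
    have hrt : u (r + m) = l m by apply: (occL_nth hr); rewrite /n; lia.
    case: (ltngtP r q1) => h.
    - exact: (hq13 r).
    - exact: (hq23 r).
    - by move: hrt; rewrite h ht1'; case: (l m).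
  by rewrite (NX_uniq hq hN) (hP _ _ hq12 hq2) hpn.
- move=> k hk1 hk2 [hk3 hk4].
  have key : forall c, lang u (rcons (L l k) c) -> c = l k.
    move=> c hc; have [r [hr hrc]] := lang_rcons_occ hc; rewrite size_L in hrc.
    have hrw := occL (ltnW hk1) hr.
    have hrt : u (r + m) = l m by apply: (occL_nth hr).
    have [q hq] := NX_ex hS hrw.
    have [_ e] := F4 _ _ hrw hrt hq.
    have := congr1 (nth false ^~ k) e; rewrite /= nth_win // hrho nth_L // hrc.
    by [].
  by have := key _ hk3; have := key _ hk4 => <-.
Qed.

End Step.

Section AllP.
Variable u l : nat -> bool.
Hypothesis hS : Sturmian u.
Hypothesis hl : forall n, leftSpecial u (L l n).

Lemma P0 : Pm u l 0.
Proof.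
move=> p q hp hq.
have hN : NX u (L l 0) p p.+1.
  split; [by [] | by move=> j; rewrite size_L | move=> r; lia].
by rewrite (NX_uniq hq hN) addn0.
Qed.

Lemma allP n : rightSpecial u (L l n) -> Pm u l n.
Proof.
elim/ltn_ind: n => n IH hn; case: n IH hn => [|n] IH hn; first exact: P0.
have ex : exists k, (k < n.+1) && RSb u (L l k).
  by exists 0; apply/andP; split => //; apply/RSbP; apply: BS0.
have ub : forall k, (k < n.+1) && RSb u (L l k) -> k <= n.+1.
  by move=> k /andP[h _]; lia.
case: (ex_maxnP ex ub) => m /andP[hm /RSbP hbm] hmax.
have hPm := IH m hm hbm.
have [n' [h1 h2 h3 h4]] := step hS hl hbm hPm.
case: (ltngtP n.+1 n') => h.
- by case: (h4 n.+1).
- by have := hmax n'; rewrite h (introT (RSbP _ _) h2) => /(_ isT); lia.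
- by rewrite h.
Qed.

Lemma XE_all n : rightSpecial u (L l n) -> lang u (l n :: rcons (L l n) (~~ l n)).
Proof. by move=> h; apply: (XE hS hl h (allP h)). Qed.

End AllP.


Lemma XplusE u y : Xplus u y <-> forall k, lang u (mkseq y k).
Proof.
split=> h k.
  have [n hn] := h k; exists n => j; rewrite size_mkseq => hj; rewrite nth_mkseq //; exact: hn.
have [n hn] := h k; exists n => j hj; have := hn j; rewrite size_mkseq nth_mkseq //; exact.
Qed.

Lemma XtE u b : Xtilde u b <-> forall (p : int) k, lang u (mkseq (fun t => b (p + Posz t)%R) k).
Proof.
split=> h.
  by move=> p k; have := h p; rewrite XplusE; apply.
by move=> p; apply/XplusE => k; apply: h.
Qed.

Lemma Xt_shift u b (s : int) : Xtilde u b -> Xtilde u (fun z => b (z + s)%R).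
Proof.
move/XtE => h; apply/XtE => p k.
have := h (p + s)%R k; congr lang; apply: eq_mkseq => t; congr b; lia.
Qed.

Section Ext.
Variable u : nat -> bool.
Hypothesis hS : Sturmian u.

Definition cands : seq (bool * bool) :=
  [:: (false, false); (false, true); (true, false); (true, true)].

Definition Ecd (w : seq bool) : bool * bool :=
  nth (false, false) cands (find (fun cd => langb u (cd.1 :: rcons w cd.2)) cands).

Definition E w := (Ecd w).1 :: rcons w (Ecd w).2.

Lemma E_lang w : lang u w -> lang u (E w).
Proof.
move=> hw; have [d hd] := lang_rext hw; have [c hc] := lext hS hd.
rewrite /E /Ecd; set P := (fun cd : bool * bool => langb u (cd.1 :: rcons w cd.2)).
have hh : has P cands.
  apply/hasP; exists (c, d); first by case: c {hc}; case: d {hd}.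
  by apply/langbP.
by have := nth_find (false, false) hh => /langbP.
Qed.

Lemma size_E w : size (E w) = (size w).+2.
Proof. by rewrite /E /= size_rcons. Qed.

Lemma nth_E w i : i < size w -> nth false (E w) i.+1 = nth false w i.
Proof. by move=> h; rewrite /E /= nth_rcons h. Qed.

Variable W : seq bool.
Hypothesis hW : lang u W.

Definition Wj j := iter j E W.

Lemma Wj_lang j : lang u (Wj j).
Proof. by elim: j => [|j IH] //=; apply: E_lang. Qed.

Lemma size_Wj j : size (Wj j) = (size W + j.*2).
Proof.
elim: j => [|j IH]; first by rewrite /Wj /= addn0.
by rewrite /Wj iterS size_E -/(Wj j) IH doubleS; lia.
Qed.

Lemma sh j t i : (i < size (Wj j)) -> nth false (Wj (j + t)) (i + t) = nth false (Wj j) i.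
Proof.
elim: t => [|t IH] h; first by rewrite !addn0.
rewrite addnS /Wj iterS addnS nth_E -/(Wj _) ?IH //.
rewrite size_Wj; rewrite size_Wj in h; lia.
Qed.

Lemma common j i j' i' : (i + j' = i' + j) -> (i < size (Wj j)) -> (i' < size (Wj j')) ->
  nth false (Wj j) i = nth false (Wj j') i'.
Proof.
move=> e h h'; case: (leqP j j') => hj.
  have -> : j' = (j + (j' - j)) by lia.
  have -> : i' = (i + (j' - j)) by lia.
  by rewrite sh.
have -> : j = (j' + (j - j')) by lia.
have -> : i = (i' + (j - j')) by lia.
by rewrite sh.
Qed.

Definition bW (z : int) : bool :=
  match z with
  | Posz k => nth false (Wj k.+1) (k + k.+1)
  | Negz k => nth false (Wj k.+1) 0
  end.

Lemma bW_pos k : bW (Posz k) = nth false (Wj k.+1) (k + k.+1).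
Proof. by []. Qed.
Lemma bW_neg k : bW (Negz k) = nth false (Wj k.+1) 0.
Proof. by []. Qed.

Lemma bval j s : (s < size (Wj j)) -> bW (Posz s - Posz j)%R = nth false (Wj j) s.
Proof.
move=> h; have h' := h; rewrite size_Wj in h'; case: (leqP j s) => hjs.
  have -> : (Posz s - Posz j)%R = Posz (s - j) by lia.
  by rewrite bW_pos; apply: common; rewrite ?size_Wj //; lia.
have -> : (Posz s - Posz j)%R = Negz (j - s).-1.
  by rewrite NegzE; lia.
by rewrite bW_neg; apply: common; rewrite ?size_Wj //; lia.
Qed.

Lemma bW_W i : (i < size W) -> bW (Posz i) = nth false W i.
Proof.
move=> h; have := bval (j := 0) (s := i); rewrite subr0; apply.
by rewrite size_Wj addn0.
Qed.

Lemma bW_Xt : Xtilde u bW.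
Proof.
apply/XtE => p k.
have [j [x [e hx]]] : exists j x, (forall t : nat, (p + Posz t)%R = (Posz (x + t) - Posz j)%R) /\
    (x + k <= size (Wj j)).
  case: p => a.
    exists (a + k), (a + (a + k)); split; first by move=> t; lia.
    rewrite size_Wj; lia.
  exists (a.+1 + k), k; split; first by move=> t; rewrite NegzE; lia.
  rewrite size_Wj; lia.
have -> : mkseq (fun t => bW (p + Posz t)%R) k = take k (drop x (Wj j)).
  apply: (@eq_from_nth _ false).
    by rewrite size_mkseq size_take size_drop; case: ltnP; lia.
  move=> i; rewrite size_mkseq => hi.
  rewrite nth_mkseq // nth_take // nth_drop e bval //; lia.
by apply: lang_take; apply: lang_drop; apply: Wj_lang.
Qed.

End Ext.

Lemma ext2 u W : Sturmian u -> lang u W ->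
  exists b, Xtilde u b /\ forall i, (i < size W) -> b (Posz i) = nth false W i.
Proof.
move=> hS hW; exists (bW u W); split; first exact: bW_Xt.
exact: bW_W.
Qed.


Section Sig.
Variable u l : nat -> bool.
Hypothesis hS : Sturmian u.
Hypothesis hl : forall n, leftSpecial u (L l n).

Lemma Xt_win b (p : int) k : Xtilde u b -> lang u (mkseq (fun t => b (p + Posz t)%R) k).
Proof. by move/XtE; apply. Qed.

Lemma ext_sep n x : exists v, lang u (L l n ++ v) /\ ~ lang u (x :: L l n ++ v).
Proof.
apply: NNPP => H.
have cl : forall v, lang u (~~ x :: L l n ++ v) -> L l n ++ v = L l (n + size v).
  move=> v hv; have h1 : lang u (L l n ++ v) by apply: lang_cons hv.
  have h2 : lang u (x :: L l n ++ v).
    by apply: NNPP => h3; apply: H; exists v; split.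
  have hls : leftSpecial u (L l n ++ v) by move: hv h2; clear; destruct x => ha hb; split.
  by rewrite (LS_L hS hl hls) size_cat size_L.
have [_ hlx] : lang u (x :: L l n) /\ lang u (~~ x :: L l n).
  by case: (hl n) => ha hb; clear -ha hb; destruct x; split.
have tail : forall p, occursAt u (~~ x :: L l n) p -> forall t, u (p + 1 + t) = l t.
  move=> p hp.
  have hK : forall K, n <= K -> win u p.+1 K = L l K.
    move=> K hK.
    have ho : take n (win u p.+1 K) = L l n.
      apply: (@eq_from_nth _ false).
        by rewrite size_takel ?size_win ?size_L.
      move=> i; rewrite size_takel ?size_win // => hi'.
      rewrite nth_take // nth_win; last lia.
      by have := hp i.+1; rewrite /= size_L ltnS => /(_ hi') <-; congr u; lia.
    have e : win u p.+1 K = L l n ++ drop n (win u p.+1 K) by rewrite -{1}(cat_take_drop n (win u p.+1 K)) ho.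
    have hw : lang u (~~ x :: L l n ++ drop n (win u p.+1 K)).
      rewrite -e; exists p => j; rewrite /= size_win => hj; case: j hj => [|j] hj /=.
        by rewrite addn0; have := hp 0; rewrite /= addn0; apply.
      by rewrite nth_win; [rewrite addnS | lia].
    by rewrite e (cl _ hw) size_drop size_win; congr L; lia.
  move=> t; have := hK (t.+1 + n) ltac:(lia).
  move/(congr1 (nth false ^~ t)); rewrite /= nth_win; last lia.
  by rewrite nth_L; [rewrite addn1 | lia].
have [p hp] := hlx.
have [q hq hq'] := recur_occ hS hp.
apply: (aper hS (p := p + 1) (d := q - p)); first lia.
move=> t; rewrite (tail _ hp).
by rewrite (_ : p + 1 + t + (q - p) = q + 1 + t); [rewrite (tail _ hq') | lia].
Qed.

Lemma fol_behead c a y : a != [::] -> fol u (c :: a) y -> fol u a y.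
Proof.
move=> ha [hy [b [hb h1 h2]]]; split => //; exists b; split => // i hi.
have := h1 i.+1; rewrite /= ltnS => /(_ hi); rewrite -[in X in _ = X -> _]/(nth false (c :: a) i.+1).
move=> <-; congr b; case: a ha hi {h1} => [//|a0 a] _ hi /=; lia.
Qed.

Lemma sep_y n x : 1 <= n -> exists y, fol u (L l n) y /\ ~ fol u (x :: L l n) y.
Proof.
move=> hn; have [v [hv hnv]] := ext_sep n x.
have [b [hb hbW]] := ext2 hS hv.
pose b' := fun z : int => b (z + Posz n.-1)%R.
have hb' : Xtilde u b' by apply: Xt_shift.
exists (fun k => b' (Posz k)); split.
  split; first by apply/XplusE => k; have := Xt_win 0 k hb'; congr lang; apply: eq_mkseq => t; rewrite add0r.
  exists b'; split => // i hi; rewrite size_L in hi *.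
  rewrite /b' (_ : (Posz i + - Posz n.-1 + Posz n.-1)%R = Posz i); last lia.
  by rewrite hbW ?nth_cat ?size_L ?hi // size_cat size_L; lia.
move=> [_ [b'' [hX h1 h2]]]; apply: hnv.
have := Xt_win (- Posz n)%R (n.+1 + size v) hX; congr lang.
apply: (@eq_from_nth _ false); first by rewrite size_mkseq /= size_cat size_L; lia.
move=> t; rewrite size_mkseq => ht; rewrite nth_mkseq //.
case: (leqP t n) => htn.
  rewrite -cat_cons nth_cat /= size_L ltnS htn.
  have := h1 t; rewrite /= size_L ltnS => /(_ htn) <-.
  by congr b''; lia.
have := h2 (t - n); rewrite /b' => e.
rewrite (_ : (- Posz n + Posz t)%R = Posz (t - n)); last lia.
rewrite -e (_ : (Posz (t - n) + Posz n.-1)%R = Posz t.-1); last lia.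
rewrite hbW; last by rewrite size_cat size_L; lia.
case: t ht htn {e} => [|t] ht htn /=; first lia.
by [].
Qed.

Lemma sig_form v : significant u v -> size v = 1 \/ exists x n, 1 <= n /\ v = x :: L l n.
Proof.
case=> hv [h1|[h2 hsub [y [hy hny]]]]; [by left|right].
case: v hv h2 hsub hy hny => [//|c a] hv h2 _ /= hy hny.
have ha : 0 < size a by move: h2 => /=; lia.
have hLS : leftSpecial u a.
  apply: NNPP => hn; apply: hny.
  have [hyX [b [hb h1 h3]]] := hy.
  split => //; exists b; split => // i hi.
  pose d := b (- Posz (size a))%R.
  have hw : lang u (d :: a).
    have := Xt_win (- Posz (size a))%R (size a).+1 hb; congr lang.
    apply: (@eq_from_nth _ false); first by rewrite size_mkseq.
    move=> t; rewrite size_mkseq => ht; rewrite nth_mkseq //.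
    case: t ht => [|t] ht /=; first by rewrite /d addr0.
    rewrite -h1; last lia.
    by congr b; lia.
  have hdc : d = c.
    apply: NNPP => hne; apply: hn.
    by move: hw hv; rewrite -/d; clear -hne; case: d hne; case: c => // _ ha hb; split.
  case: i hi => [|i] hi /=.
    by rewrite -hdc /d; congr b; lia.
  rewrite -h1; last by move: hi => /=; lia.
  by congr b; lia.
by exists c, (size a); split => //; rewrite -(LS_L hS hl hLS).
Qed.

Lemma lang_xL x n : lang u (x :: L l n).
Proof. by case: (hl n); case: x. Qed.

Lemma sig_intro v : lang u v -> (size v = 1 \/ exists x n, 1 <= n /\ v = x :: L l n) ->
  significant u v.
Proof.
move=> hv [h1|[x [n [hn ->]]]]; first by split => //; left.
split; first exact: lang_xL.
right; split.
- by rewrite /= size_L; lia.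
- move=> y; apply: fol_behead; case: n hn => //.
- have [y [h1 h2]] := sep_y x hn; by exists y.
Qed.

Lemma sig_iff v : significant u v <-> lang u v /\ (size v = 1 \/ exists x n, 1 <= n /\ v = x :: L l n).
Proof.
split; first by move=> h; split; [case: h | exact: sig_form].
by case=> h1 h2; apply: sig_intro.
Qed.

End Sig.


Section HB.
Variable u l : nat -> bool.
Hypothesis hS : Sturmian u.
Hypothesis hl : forall n, leftSpecial u (L l n).

Lemma size_xL x n : size (x :: L l n) = n.+1.
Proof. exact: (congr1 S (size_L l n)). Qed.

Definition Wn n := rcons (l n :: L l n) (~~ l n).

Lemma BS_XE n : rightSpecial u (L l n) -> lang u (Wn n).
Proof. by move=> h; apply: (XE_all hS hl h). Qed.

Lemma uniqL n a b : lang u (a :: rcons (L l n) (~~ l n)) -> lang u (b :: rcons (L l n) (~~ l n)) -> a = b.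
Proof.
move=> ha hb; apply: NNPP => hne.
have hls : leftSpecial u (rcons (L l n) (~~ l n)).
  by move: ha hb hne; case: a; case: b => // h1 h2 _; split.
have := LS_L hS hl hls; rewrite size_rcons size_L L_S => /rcons_inj [].
by case: (l n).
Qed.

Lemma RS_drop w k : rightSpecial u w -> rightSpecial u (drop k w).
Proof.
move=> [h0 h1]; case: (leqP k (size w)) => hk.
  by split; rewrite -drop_rcons //; apply: lang_drop.
by rewrite drop_oversize; [split; apply: lang1 | lia].
Qed.

Lemma lang_Lrcons n : lang u (rcons (L l n) (l n)).
Proof. by rewrite -L_S; apply: lang_L. Qed.

Lemma RS_xL k : rightSpecial u (L l k) -> rightSpecial u (l k :: L l k).
Proof.
move=> h; have h1 := BS_XE h.
have h2 : lang u (rcons (l k :: L l k) (l k)) by rewrite rcons_cons -L_S; apply: lang_xL.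
by move: h1 h2; rewrite /Wn; case: (l k) => ha hb; split.
Qed.

Lemma RSsig_iff t : (rightSpecial u t /\ significant u t) <->
  exists k, rightSpecial u (L l k) /\ t = l k :: L l k.
Proof.
split.
  case=> hr /(sig_iff hS hl) [hlt [h1|[x [n [hn et]]]]]; last subst t.
    case: t hr hlt h1 => [//|z [|//]] hr hlt _.
    exists 0; split; first exact: BS0.
    have := RS_uniq hS hr (RS_xL (@BS0 u l hS)) => /(_ erefl) ->.
    by [].
  have hbs : rightSpecial u (L l n).
    case: hr => h0 h1; rewrite !rcons_cons in h0 h1.
    by split; [exact: lang_cons h0 | exact: lang_cons h1].
  exists n; split => //.
  have hx : lang u (x :: rcons (L l n) (~~ l n)) by case: hr; case: (l n).
  by rewrite (uniqL hx (BS_XE hbs)).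
case=> k [hk ->]; split; first exact: RS_xL.
apply: sig_intro => //; first exact: lang_xL.
by case: k hk => [|k] hk; [left | right; exists (l k.+1), k.+1].
Qed.

Lemma IsSig_uniq W b b' : IsSig u W b -> IsSig u W b' -> b = b'.
Proof.
move=> [s1 g1 m1] [s2 g2 m2].
have e : size b = size b' by apply/eqP; rewrite eqn_leq m1 // m2.
move: s1 s2; rewrite !suffixE e => /eqP h1 /eqP h2.
by rewrite -h1 h2.
Qed.

Lemma IsSig_self W : significant u W -> IsSig u W W.
Proof. by move=> h; split => // [|t /size_suffix //]; apply: suffix_refl. Qed.

Lemma sig_max n t : rightSpecial u (L l n) -> suffix t (Wn n) -> significant u t -> 1 < size t ->
  exists k, [/\ k < n, rightSpecial u (L l k), l k = ~~ l n & size t = k.+2].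
Proof.
move=> hbs /suffixP [s e] /(sig_iff hS hl) [hlt [h1|[x [K [hK et]]]]] hsz.
  by rewrite h1 in hsz.
subst t; clear hlt; case: K hK e hsz => [//|K] _ e _.
move: e; rewrite L_S -rcons_cons -rcons_cat /Wn => /rcons_inj [e1 e2].
have hsz : size (l n :: L l n) = size (s ++ x :: L l K) by rewrite e1.
rewrite /= size_cat /= !size_L in hsz.
case: (ltnP K n) => hKn; last first.
  have eK : K = n by lia.
  by move: e2; rewrite eK; case: (l n).
exists K; split => //; last by rewrite size_rcons /= size_L.
have := RS_drop (size s) hbs.
have -> : drop (size s) (L l n) = L l K.
  by have := congr1 (drop (size s).+1) e1; rewrite /= -cat_rcons drop_cat size_rcons ltnn subnn drop0.
by [].
Qed.

Lemma drop_xL n j : rightSpecial u (L l n) -> rightSpecial u (L l j) -> j <= n ->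
  drop (n - j) (l n :: L l n) = l j :: L l j.
Proof.
move=> hn hj hjn; apply: (RS_uniq hS); [apply: RS_drop; exact: RS_xL | exact: RS_xL |].
by rewrite size_drop /= !size_L; lia.
Qed.

Lemma sigWn n j : rightSpecial u (L l n) -> j < n -> rightSpecial u (L l j) -> l j != l n ->
  (forall k, j < k -> k < n -> rightSpecial u (L l k) -> l k = l n) ->
  IsSig u (Wn n) (l j :: L l j.+1).
Proof.
move=> hn hjn hj hne hmax.
have elj : l j = ~~ l n by move: hne; case: (l j); case: (l n).
have hsuf : Wn n = take (n - j) (l n :: L l n) ++ (l j :: L l j.+1).
  rewrite L_S -rcons_cons -(drop_xL hn hj (ltnW hjn)) elj /Wn -rcons_cat.
  by rewrite cat_take_drop.
split.
- by apply/suffixP; exists (take (n - j) (l n :: L l n)).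
- apply: sig_intro => //; last by right; exists (l j), j.+1.
  have := BS_XE hn; rewrite hsuf => /lang_catr.
  by [].
- move=> t ht hsig; case: (leqP (size t) 1) => hs; first by rewrite size_xL; lia.
  have [k [hk1 hk2 hk3 hk4]] := sig_max hn ht hsig hs.
  rewrite hk4 size_xL ltnS; case: (leqP k j) => // hkj.
  by have := hmax k hkj hk1 hk2; rewrite hk3; case: (l n).
Qed.

Lemma sigWnZ n : rightSpecial u (L l n) -> (forall k, k < n -> rightSpecial u (L l k) -> l k = l n) ->
  IsSig u (Wn n) [:: ~~ l n].
Proof.
move=> hn hmax; split.
- by apply/suffixP; exists (l n :: L l n); rewrite /Wn cats1.
- by apply: sig_intro => //; [apply: lang1 | left].
- move=> t ht hsig; case: (leqP (size t) 1) => hs //.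
  have [k [hk1 hk2 hk3 hk4]] := sig_max hn ht hsig hs.
  by have := hmax k hk1 hk2; rewrite hk3; case: (l n).
Qed.

Lemma sig_exists n : rightSpecial u (L l n) -> exists b, IsSig u (Wn n) b /\
  ((exists j, [/\ j < n, rightSpecial u (L l j), l j != l n,
               (forall k, j < k -> k < n -> rightSpecial u (L l k) -> l k = l n)
             & b = l j :: L l j.+1]) \/
   ((forall k, k < n -> rightSpecial u (L l k) -> l k = l n) /\ b = [:: ~~ l n])).
Proof.
move=> hn.
case: (boolP [exists j : 'I_n, RSb u (L l j) && (l j != l n)]) => hex.
  have ex : exists j, [&& j < n, RSb u (L l j) & l j != l n].
    by case/existsP: hex => j /andP[h1 h2]; exists j; rewrite ltn_ord h1 h2.
  have ub : forall j, [&& j < n, RSb u (L l j) & l j != l n] -> j <= n.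
    by move=> j /andP[h _]; lia.
  case: (ex_maxnP ex ub) => j /and3P[h1 /RSbP h2 h3] hmax.
  have hm : forall k, j < k -> k < n -> rightSpecial u (L l k) -> l k = l n.
    move=> k hk1 hk2 hk3; apply: NNPP => hne.
    have := hmax k; rewrite hk2 (introT (RSbP _ _) hk3) /=.
    have -> : l k != l n by apply/eqP.
    by move=> /(_ isT); lia.
  exists (l j :: L l j.+1); split; first exact: sigWn.
  by left; exists j; split.
have hm : forall k, k < n -> rightSpecial u (L l k) -> l k = l n.
  move=> k hk1 hk2; apply: NNPP => hne; move/negP: hex; apply.
  apply/existsP; exists (Ordinal hk1) => /=; rewrite (introT (RSbP _ _) hk2) /=.
  by apply/eqP.
by exists [:: ~~ l n]; split; [apply: sigWnZ | right].
Qed.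

Lemma sigeq m n : rightSpecial u (L l m) -> rightSpecial u (L l n) -> m < n ->
  (forall k, m < k -> k < n -> ~ rightSpecial u (L l k)) -> l m = l n ->
  forall b, IsSig u (Wn n) b <-> IsSig u (Wn m) b.
Proof.
move=> hm hn hmn hbet e.
have [b0 [hb0 hc]] := sig_exists hm.
have hb0' : IsSig u (Wn n) b0.
  case: hc => [[j [h1 h2 h3 h4 ->]]|[h1 ->]].
    apply: sigWn => //; first lia; first by rewrite -e.
    move=> k hk1 hk2 hk3; case: (ltngtP k m) => hkm.
    - by rewrite -e; apply: h4.
    - by case: (hbet k).
    - by rewrite hkm.
  rewrite e; apply: sigWnZ => // k hk1 hk2; case: (ltngtP k m) => hkm.
  - by rewrite -e; apply: h1.
  - by case: (hbet k).
  - by rewrite hkm.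
by move=> b; split => h; [rewrite -(IsSig_uniq hb0' h) | rewrite -(IsSig_uniq hb0 h)].
Qed.

Lemma prev_BS n : 0 < n -> exists m, [/\ m < n, rightSpecial u (L l m)
  & forall k, m < k -> k < n -> ~ rightSpecial u (L l k)].
Proof.
move=> hn.
have ex : exists k, (k < n) && RSb u (L l k).
  by exists 0; rewrite hn; apply/RSbP; apply: BS0.
have ub : forall k, (k < n) && RSb u (L l k) -> k <= n by move=> k /andP[h _]; lia.
case: (ex_maxnP ex ub) => m /andP[h1 /RSbP h2] hmax.
exists m; split => // k hk1 hk2 hk3.
by have := hmax k; rewrite hk2 (introT (RSbP _ _) hk3) => /(_ isT); lia.
Qed.

End HB.


Section Final.
Variable u l : nat -> bool.
Hypothesis hS : Sturmian u.
Hypothesis hl : forall n, leftSpecial u (L l n).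

Lemma part1 v : significant u v <->
     [\/ v = [:: false], v = [:: true]
       | exists (x : bool) (n : nat), 1 <= n /\ v = x :: L l n].
Proof.
split.
  move/(sig_iff hS hl) => [hv [h1|h2]]; last by constructor 3.
  by case: v hv h1 => [//|[] [|//]] _ _; [constructor 2 | constructor 1].
case=> [->|->|[x [n [hn ->]]]].
- by apply: sig_intro => //; [apply: lang1 | left].
- by apply: sig_intro => //; [apply: lang1 | left].
- by apply: sig_intro => //; [apply: lang_xL | right; exists x, n].
Qed.

Lemma L1 : L l 1 = [:: l 0].
Proof. by []. Qed.

Lemma consec_iff m n : m < n -> rightSpecial u (L l m) -> rightSpecial u (L l n) ->
  (forall k, m < k -> k < n -> ~ rightSpecial u (L l k)) ->
  consecRS u (l m :: L l m) (l n :: L l n).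
Proof.
move=> hmn hm hn hbet; split.
- by apply/(RSsig_iff hS hl); exists m.
- by apply/(RSsig_iff hS hl); exists n.
- by rewrite !size_xL.
- move=> v hr hs [h1 h2]; have [k [hk ev]] := (RSsig_iff hS hl v).1 (conj hr hs).
  by subst v; rewrite !size_xL in h1 h2; apply: (hbet k).
Qed.

Lemma consec_inv w x m n : consecRS u (w :: L l m) (x :: L l n) ->
  [/\ w = l m, x = l n, rightSpecial u (L l m), rightSpecial u (L l n)
    & forall k, m < k -> k < n -> ~ rightSpecial u (L l k)].
Proof.
move=> [[hr1 hs1] [hr2 hs2] hsz hbet].
have [k1 [hk1 e1]] := (RSsig_iff hS hl _).1 (conj hr1 hs1).
have [k2 [hk2 e2]] := (RSsig_iff hS hl _).1 (conj hr2 hs2).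
have ek1 : k1 = m by have := congr1 size e1; rewrite !size_xL => -[].
have ek2 : k2 = n by have := congr1 size e2; rewrite !size_xL => -[].
subst k1 k2; have ew : w = l m by case: e1.
have ex : x = l n by case: e2.
split => // k hk3 hk4 hk.
have [hr hs] := (RSsig_iff hS hl (l k :: L l k)).2 (ex_intro _ k (conj hk erefl)).
by apply: (hbet _ hr hs); rewrite !size_xL.
Qed.

Lemma HB_bwd a b : HBlisted u l a b -> HBarrow u a b.
Proof.
have W0 : Wn l 0 = [:: l 0; ~~ l 0] by [].
have hW0 := BS_XE hS hl (@BS0 u l hS); rewrite W0 in hW0.
have hs0 := sigWnZ hS hl (@BS0 u l hS) (fun k (hk : k < 0) => False_ind _ (notF hk)); rewrite W0 in hs0.
have sig1 : forall z, significant u [:: z] by move=> z; apply: sig_intro => //; [apply: lang1 | left].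
have sigx : forall x n, significant u (x :: L l n.+1).
  by move=> x n; apply: sig_intro => //; [apply: lang_xL | right; exists x, n.+1].
case=> [[e0 [[-> ->]|[-> ->]|[-> ->]]]|[[e0 [[-> ->]|[-> ->]|[-> ->]]]|[[x [n [hn [-> ->]]]]|]]].
- split; first exact: sig1. by exists true; rewrite e0 in hW0 hs0.
- split; first exact: sig1. exists false; have := sigx false 0; rewrite L1 e0 => h.
  by split; [case: h | apply: IsSig_self].
- split; first exact: sig1. exists false; have := sigx true 0; rewrite L1 e0 => h.
  by split; [case: h | apply: IsSig_self].
- split; first exact: sig1. by exists false; rewrite e0 in hW0 hs0.
- split; first exact: sig1. exists true; have := sigx true 0; rewrite L1 e0 => h.
  by split; [case: h | apply: IsSig_self].
- split; first exact: sig1. exists true; have := sigx false 0; rewrite L1 e0 => h.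
  by split; [case: h | apply: IsSig_self].
- case: n hn => // n _; split; first exact: sigx.
  exists (l n.+1); rewrite rcons_cons -L_S; split; first exact: lang_xL.
  exact: IsSig_self.
case=> x [w [n [m [hmn hc -> hb]]]].
have [ew ex hm hn hbet] := consec_inv hc; subst x w.
case: n hmn hn hbet hc hb => [//|n'] hmn hn hbet hc hb.
split; first exact: sigx.
exists (~~ l n'.+1); split; first exact: (BS_XE hS hl hn).
case: hb => [[hne ->]|[he hs]].
  have hne' : l m != l n'.+1 by rewrite eq_sym.
  exact: (sigWn hS hl hn hmn hm hne' (fun k hk1 hk2 hk3 => False_ind _ (hbet k hk1 hk2 hk3))).
by apply/(sigeq hS hl hm hn hmn hbet (esym he)).
Qed.

Lemma HB_fwd a b : HBarrow u a b -> HBlisted u l a b.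
Proof.
move=> [hsa [c [hlc hsig]]].
have [_ [h1|[x [n [hn ea]]]]] := (sig_iff hS hl a).1 hsa.
  case: a h1 hsa hlc hsig => [//|z [|//]] _ hsa hlc hsig.
  case: (eqVneq c (l 0)) => hc.
    subst c.
    have hW : significant u (rcons [:: z] (l 0)).
      by apply: sig_intro => //; right; exists z, 1.
    have eb := IsSig_uniq hsig (IsSig_self hW); subst b.
    rewrite /HBlisted; case e0 : (l 0); case: z {hsa hlc hsig hW}.
    - by right; left; split => //; constructor 2.
    - by right; left; split => //; constructor 3.
    - by left; split => //; constructor 3.
    - by left; split => //; constructor 2.
  have ec : c = ~~ l 0 by move: hc; clear; case: c; case: (l 0).
  subst c.
  have ez : z = l 0.
    by apply: (uniqL hS hl (n := 0)) => //; apply: (BS_XE hS hl (@BS0 u l hS)).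
  subst z.
  have hs0 := sigWnZ hS hl (@BS0 u l hS) (fun k (hk : k < 0) => False_ind _ (notF hk)).
  have eb := IsSig_uniq hsig hs0; subst b.
  by rewrite /HBlisted; case e0 : (l 0); [right; left | left]; split => //; constructor 1.
subst a.
case: (eqVneq c (l n)) => hc.
  subst c.
  have hW : significant u (rcons (x :: L l n) (l n)).
    by rewrite rcons_cons -L_S; apply: sig_intro => //; [apply: lang_xL | right; exists x, n.+1].
  have eb := IsSig_uniq hsig (IsSig_self hW); subst b.
  by right; right; left; exists x, n; rewrite rcons_cons -L_S.
have ec : c = ~~ l n by move: hc; clear; case: c; case: (l n).
subst c.
have hbs : rightSpecial u (L l n).
  split; move: (lang_Lrcons hl n) => h2; have h1 := lang_cons hlc; rewrite ?rcons_cons in h1.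
    by case: (l n) h1 h2.
  by case: (l n) h1 h2.
have ex : x = l n by exact: (uniqL hS hl hlc (BS_XE hS hl hbs)).
subst x.
have [m [hmn hm hbet]] := prev_BS l hS hn.
right; right; right; exists (l n), (l m), n, m; split => //.
  exact: consec_iff.
case: (eqVneq (l n) (l m)) => he.
  right; split => //; apply/(sigeq hS hl hm hbs hmn hbet (esym he)).
  exact: hsig.
left; split => //.
have hne' : l m != l n by rewrite eq_sym.
have hs := sigWn hS hl hbs hmn hm hne' (fun k hk1 hk2 hk3 => False_ind _ (hbet k hk1 hk2 hk3)).
exact: IsSig_uniq hsig hs.
Qed.

End Final.


Theorem theorem4p13 (u l : nat -> bool) :
  Sturmian u ->
  (forall n, leftSpecial u (L l n)) ->
  (forall v, significant u v <->
     [\/ v = [:: false], v = [:: true]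
       | exists (x : bool) (n : nat), 1 <= n /\ v = x :: L l n]) /\
  (forall a b, HBarrow u a b <-> HBlisted u l a b).
Proof.
move=> hS hl; split; first exact: part1.
by move=> a b; split; [apply: HB_fwd | apply: HB_bwd].
Qed.
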